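(* Let ${\mathscr X}$ be a Hausdorff space, ${\mathscr A}$ a set of finite Borel partitions of ${\mathscr X}$ directed under refinement, and equip $M^1({\mathscr X})$ with the weak topology (assumed Hausdorff, with $P\mapsto P(A)$ Borel measurable for all Borel $A$). Let $\Pi$ be a Radon probability measure on $M^1({\mathscr X})$ (weak topology) with mean measure $G$. Then for every $\delta,\epsilon>0$ there exist $\alpha\in{\mathscr A}$ and $\eta>0$ such that for every Borel set $B$ with $\inf\{G(B\triangle C):C\in\sigma(\alpha)\}<\eta$, $$\Pi\Bigl(\bigl\{P\in M^1({\mathscr X}):\inf\{P(B\triangle C):C\in\sigma(\alpha)\}>\delta\bigr\}\Bigr)<\epsilon.$$
   Context: The weak topology on $M^1({\mathscr X})$ (Radon probability measures) is the coarsest topology making $P\mapsto\int h\,dP$ continuous for all bounded Borel $h$. Mean measure: $G(A)=\int P(A)\,d\Pi(P)$. $B\triangle C=(B\setminus C)\cup(C\setminus B)$; $\sigma(\alpha)$ is the $\sigma$-algebra generated by the partition $\alpha$. *)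

(* Defs.v *)
From HB Require Import structures.
From mathcomp Require Import all_boot all_order all_algebra.
From mathcomp Require Import all_classical all_reals all_analysis measurable_realfun.
Set Implicit Arguments.
Unset Strict Implicit.
Unset Printing Implicit Defensive.
Import Order.TTheory GRing.Theory Num.Theory.
Import numFieldNormedType.Exports.
Local Open Scope classical_set_scope.
Local Open Scope ring_scope.

Definition Borel (T : ptopologicalType) := g_sigma_algebraType (@open T).

(* Radon probability measure on the Borel sets of a Hausdorff space:
   inner regular by compact sets on every Borel set (local finiteness is
   automatic for a finite measure). *)
Definition radon (R : realType) (T : ptopologicalType)
  (P : probability (Borel T) R) : Prop :=
  forall A : set (Borel T), measurable A ->
    P A = ereal_sup [set P K | K in [set K : set T | compact K /\ K `<=` A]].

Lemma radon_dirac (R : realType) (T : ptopologicalType) (x : T) :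
  radon (\d_(x : Borel T) : probability (Borel T) R).
Proof.
move=> A mA; rewrite /= /dirac.
have Hle : (ereal_sup [set ((\1_K x)%:E : \bar R) | K in
    [set K : set T | compact K /\ K `<=` A]] <= (\1_A x)%:E)%E.
  apply: ub_ereal_sup => _ [K [_ KA] <-]; rewrite lee_fin.
  rewrite /indic; case: (boolP (x \in K)) => xK /=.
    by rewrite (mem_set (KA _ (set_mem xK))).
  by case: (x \in A).
apply/eqP; rewrite eq_le Hle andbT.
case: (boolP (x \in A)) => xA.
  apply: ereal_sup_ubound; exists [set x]; first split.
  - exact: compact_set1.
  - move=> y /= ->; exact: set_mem.
  by rewrite /indic xA (@mem_set _ [set x] x).
rewrite /indic (negbTE xA) /=.
apply: ereal_sup_ubound; exists set0; first split.
- exact: compact0.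
- by [].
by rewrite /indic in_set0.
Qed.

Definition M1 (R : realType) (X : ptopologicalType) :=
  {P : probability (Borel X) R | radon P}.

HB.instance Definition _ (R : realType) (X : ptopologicalType) :=
  gen_eqMixin (M1 R X).
HB.instance Definition _ (R : realType) (X : ptopologicalType) :=
  gen_choiceMixin (M1 R X).
HB.instance Definition _ (R : realType) (X : ptopologicalType) :=
  isPointed.Build (M1 R X) (exist _ _ (@radon_dirac R X point)).

Definition integ (R : realType) (X : ptopologicalType) (h : X -> R)
  (P : M1 R X) : R := (\int[sval P]_(x in [set: Borel X]) h x)%R.

Definition weak_index (R : realType) (X : ptopologicalType) :
  set ((X -> R) * set R) :=
  [set hU | measurable_fun [set: Borel X] (hU.1 : Borel X -> R) /\
            (exists M : R, forall x, `|hU.1 x| <= M) /\ open hU.2].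

Definition weak_subbase (R : realType) (X : ptopologicalType)
  (hU : (X -> R) * set R) : set (M1 R X) := integ hU.1 @^-1` hU.2.

(* M^1(X) with the weak topology: the coarsest topology making every
   P |-> \int h dP (h bounded Borel) continuous, i.e. the topology generated
   by the subbase of preimages of open sets under these maps. *)
Definition M1w (R : realType) (X : ptopologicalType) := M1 R X.
HB.instance Definition _ (R : realType) (X : ptopologicalType) :=
  Pointed.on (M1w R X).
HB.instance Definition _ (R : realType) (X : ptopologicalType) :=
  @isSubBaseTopological.Build (M1w R X) _ (@weak_index R X) (@weak_subbase R X).

Definition finite_borel_partition d (T : measurableType d)
  (alpha : set (set T)) : Prop :=
  [/\ finite_set alpha,
      (forall A, alpha A -> measurable A /\ A !=set0),
      (forall A B, alpha A -> alpha B -> A `&` B !=set0 -> A = B) &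
      \bigcup_(A in alpha) A = setT].

Definition refines T (gamma alpha : set (set T)) : Prop :=
  forall C, gamma C -> exists2 A, alpha A & C `<=` A.

Definition directed_by_refinement T (AA : set (set (set T))) : Prop :=
  AA !=set0 /\
  forall alpha beta, AA alpha -> AA beta ->
    exists2 gamma, AA gamma & refines gamma alpha /\ refines gamma beta.

Definition sigma_gen T (alpha : set (set T)) : set (set T) := <<s alpha >>.

Definition symdiff T (B C : set T) : set T := (B `\` C) `|` (C `\` B).

Definition mean_measure (R : realType) (X : ptopologicalType)
  (Pi : probability (Borel (M1w R X)) R) (A : set (Borel X)) : \bar R :=
  (\int[Pi]_(P in [set: Borel (M1w R X)]) (sval (P : M1 R X)) A)%E.

(* Main.v *)
Require Import Defs.
From HB Require Import structures.
From mathcomp Require Import all_boot all_order all_algebra.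
From mathcomp Require Import all_classical all_reals all_analysis measurable_realfun.
From mathcomp Require Import finmap.
Import Order.TTheory GRing.Theory Num.Theory.
Local Open Scope classical_set_scope.
Local Open Scope ring_scope.

Section fin.
Variables (T : Type) (alpha : set (set T)).
Hypothesis afin : finite_set alpha.
Hypothesis adisj : forall A B, alpha A -> alpha B -> A `&` B !=set0 -> A = B.
Hypothesis acov : \bigcup_(A in alpha) A = setT.

Let U := [set \bigcup_(A in F) A | F in [set F : set (set T) | F `<=` alpha]].

Let U_sigma : sigma_algebra setT U.
Proof.
split.
- exists set0 => //; exact: bigcup_set0.
- move=> _ [F Fa <-]; exists (alpha `\` F); first by move=> A [].
  apply/seteqP; split => x.
  + move=> [A [aA nFA] Ax]; split => // -[A' FA' A'x].
    have AA' : A = A' by apply: adisj => //; [exact: Fa|exists x].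
    by apply: nFA; rewrite AA'.
  + move=> [_ nx]; have : setT x by [].
    rewrite -acov => -[A aA Ax]; exists A => //; split => // FA.
    by apply: nx; exists A.
- move=> G HG.
  have HG' : forall n, exists F, F `<=` alpha /\ \bigcup_(A in F) A = G n.
    by move=> n; have [F ? ?] := HG n; exists F.
  have [F HF] := choice HG'.
  exists (\bigcup_n F n).
    by move=> A [n _ FnA]; have [+ _] := HF n; apply.
  apply/seteqP; split => x.
  + move=> [A [n _ FnA] Ax]; exists n => //; have [_ <-] := HF n.
    by exists A.
  + move=> [n _]; have [_ <-] := HF n; move=> [A FnA Ax].
    by exists A => //; exists n.
Qed.

Lemma sigma_gen_sub : sigma_gen alpha `<=` U.
Proof.
apply: smallest_sub; first exact: U_sigma.
move=> A aA; exists [set A]; first by move=> B ->.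
exact: bigcup_set1.
Qed.

Lemma sigma_gen_finite : finite_set (sigma_gen alpha).
Proof.
apply: (sub_finite_set sigma_gen_sub).
apply: (@sub_finite_set _ _ ((fun X : {fset set T} => \bigcup_(A in [set` X]) A)
   @` [set` fpowerset (fset_set alpha)])); last first.
  by apply: finite_image; exact: finite_fset.
move=> _ [F Fa <-]; have Ffin : finite_set F := sub_finite_set Fa afin.
exists (fset_set F); last by rewrite fset_setK.
by rewrite /= fpowersetE -fset_set_sub.
Qed.
End fin.

Lemma sigma_gen_meas d (T : measurableType d) (alpha : set (set T)) :
  (forall A, alpha A -> measurable A) -> sigma_gen alpha `<=` measurable.
Proof.
by move=> H; apply: smallest_sub => //; exact: sigma_algebra_measurable.
Qed.

Theorem mainTheorem5 (R : realType) (X : ptopologicalType)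
  (AA : set (set (set (Borel X))))
  (hX : hausdorff_space X)
  (hAA : forall alpha, AA alpha -> finite_borel_partition alpha)
  (hdir : directed_by_refinement AA)
  (hW : hausdorff_space (M1w R X))
  (hmeas : forall A : set (Borel X), measurable A ->
     measurable_fun [set: Borel (M1w R X)]
       (fun P : Borel (M1w R X) => (sval (P : M1 R X)) A))
  (Pi : probability (Borel (M1w R X)) R) (hPi : radon Pi) :
  forall delta eps : R, 0 < delta -> 0 < eps ->
  exists2 alpha, AA alpha &
  exists2 eta : R, 0 < eta &
    forall B : set (Borel X), measurable B ->
      (ereal_inf [set mean_measure Pi (symdiff B C) | C in sigma_gen alpha]
         < eta%:E)%E ->
      (Pi [set P : Borel (M1w R X) |
             (delta%:E < ereal_inf [set (sval (P : M1 R X)) (symdiff B C)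
                                   | C in sigma_gen alpha])%E]
         < eps%:E)%E.
Proof.
move=> delta eps d0 e0.
have [[alpha AAa] _] := hdir.
have [afin ameas adisj acov] := hAA _ AAa.
have sfin := @sigma_gen_finite _ _ afin adisj acov.
have smeas : sigma_gen alpha `<=` measurable :=
  @sigma_gen_meas _ _ alpha (fun A h => (ameas A h).1).
exists alpha => //; exists (delta * eps); first exact: mulr_gt0.
move=> B mB /ereal_inf_lt [_ [C0 sC0 <-] GC0].
have msd : forall C, sigma_gen alpha C -> measurable (symdiff B C).
  by move=> C /smeas mC; apply: measurableU; apply: measurableD.
have mg : forall C, sigma_gen alpha C -> measurable_fun setT
   (fun P : Borel (M1w R X) => (sval (P : M1 R X)) (symdiff B C)).
  by move=> C h; apply: hmeas; apply: msd.
set S := [set P : Borel (M1w R X) | _].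
have SE : S = \bigcup_n \bigcap_(C in sigma_gen alpha)
   [set P : Borel (M1w R X) | ((delta + n.+1%:R^-1)%:E <= (sval (P : M1 R X)) (symdiff B C))%E].
  apply/seteqP; split => P /=.
  - rewrite /S /= => H.
    have [n hn] : exists n : nat, ((delta + n.+1%:R^-1)%:E <=
        ereal_inf [set (sval (P : M1 R X)) (symdiff B C) | C in sigma_gen alpha])%E.
      move: H; case: (ereal_inf _) => [r| |] /=.
      + by rewrite lte_fin => /ltr_add_invr [n hn]; exists n; rewrite lee_fin ltW.
      + by move=> _; exists 0%N; rewrite leey.
      + by rewrite ltNge leNye.
    exists n => // C sC; apply: le_trans hn _; apply: ereal_inf_lbound; by exists C.
  - move=> [n _ H]; apply: (@lt_le_trans _ _ (delta + n.+1%:R^-1)%:E).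
      by rewrite lte_fin ltrDl invr_gt0.
    by apply: le_ereal_inf_tmp => _ [C sC <-]; exact: H.
have mS : measurable S.
  rewrite SE; apply: bigcupT_measurable => n; apply: fin_bigcap_measurable => // C sC.
  by have := emeasurable_fun_c_infty measurableT (mg C sC) (delta + n.+1%:R^-1)%:E; rewrite setTI.
set g := (fun P : Borel (M1w R X) => (sval (P : M1 R X)) (symdiff B C0)).
have mT : measurable (setT `&` [set P | (delta%:E <= `|g P|)%E]).
  have -> : [set P | (delta%:E <= `|g P|)%E] = [set P | (delta%:E <= g P)%E].
    by apply/seteqP; split => P /=; rewrite gee0_abs.
  exact: emeasurable_fun_c_infty measurableT (mg C0 sC0) _.
have Sle : S `<=` setT `&` [set P | (delta%:E <= `|g P|)%E].
  move=> P SP; split => //=; rewrite gee0_abs //.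
  apply/ltW/(lt_le_trans SP); apply: ereal_inf_lbound; by exists C0.
have mk := @le_integral_comp_abse _ _ _ Pi setT measurableT g delta id
  (@measurable_id _ _ setT) (fun r h => h) (fun x y _ _ h => h) (mg C0 sC0) d0.
have Hint : (\int[Pi]_(x in setT) id `|g x| = mean_measure Pi (symdiff B C0))%E.
  by apply: eq_integral => P _; rewrite /= gee0_abs.
rewrite Hint /= in mk.
rewrite ltNge; apply/negP => He.
have h1 : ((delta * eps)%:E <= delta%:E * Pi S)%E.
  by rewrite EFinM; apply: lee_wpmul2l => //; rewrite lee_fin ltW.
have h2 : (delta%:E * Pi S <= delta%:E * Pi (setT `&` [set P | (delta%:E <= `|g P|)%E]))%E.
  apply: lee_wpmul2l; first by rewrite lee_fin ltW.
  apply: le_measure => //; apply/mem_set; [exact: mS|exact: mT].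
have := le_lt_trans (le_trans h1 (le_trans h2 mk)) GC0.
by rewrite ltxx.
Qed.
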